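(* A channel $\mathcal{N}\in\mathrm{CPTP}(A'B\to AB)$ is a conditionally mixing channel if and only if there exist a system $R$, an isometry channel $\mathcal{V}\in\mathrm{CPTP}(A'\to RA)$ and a conditionally unital channel $\mathcal{E}\in\mathrm{CPTP}(RB\to B)$ such that $\mathcal{N}^{A'B\to AB}=\mathcal{E}^{RB\to B}\circ\mathcal{V}^{A'\to RA}$.
   Context: Systems are finite-dimensional, $\mathbf{u}^B=I^B/|B|$; compositions act as identity on systems not involved. A channel $\mathcal{E}\in\mathrm{CPTP}(RB\to B)$ is conditionally unital if $\mathcal{E}(\tau^R\otimes\mathbf{u}^B)=\mathbf{u}^B$ for every density matrix $\tau^R$. A channel $\mathcal{N}\in\mathrm{CPTP}(A'B\to AB)$ is conditionally mixing if (i) it is $B\not\to A$ signalling, i.e. $\mathcal{N}=\mathcal{E}'^{RB\to B}\circ\mathcal{V}'^{A'\to RA}$ for some system $R$, isometry channel $\mathcal{V}'$ and channel $\mathcal{E}'$; and (ii) for every density matrix $\rho^{A'}$ there is a density matrix $\sigma^A$ with $\mathcal{N}(\rho^{A'}\otimes\mathbf{u}^B)=\sigma^A\otimes\mathbf{u}^B$. *)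

(* Defs.v *)
(* Quantum systems are finite types (orthonormal basis labels);
   scalars live in an arbitrary numClosedFieldType C (e.g. algC, or complex R
   for R a real closed / real field). Operators on a system I are finite
   functions on I * I (matrix entries X(i,j)); composite systems are product
   types, so the tensor-factor reorderings are explicit reindexings. *)
From HB Require Import structures.
From mathcomp Require Import all_boot all_order all_algebra.
Set Implicit Arguments. Unset Strict Implicit. Unset Printing Implicit Defensive.
Import Order.TTheory GRing.Theory Num.Theory.
Local Open Scope ring_scope.

Section Quantum.
Variable C : numClosedFieldType.

Definition op (I : finType) := {ffun (I * I)%type -> C}.

Definition trace (I : finType) (X : op I) : C := \sum_(i : I) X (i, i).

Definition psd (I : finType) (X : op I) : Prop :=
  forall v : I -> C, 0 <= \sum_(i : I) \sum_(j : I) (v i)^* * X (i, j) * v j.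

Definition density (I : finType) (X : op I) : Prop := psd X /\ trace X = 1.

Definition optens (I J : finType) (X : op I) (Y : op J) : op (I * J)%type :=
  [ffun p => X (p.1.1, p.2.1) * Y (p.1.2, p.2.2)].

Definition mixed (I : finType) : op I :=
  [ffun p => (p.1 == p.2)%:R / #|I|%:R].

Definition linmap (I J : finType) := op I -> op J.

Definition linear_map (I J : finType) (F : linmap I J) : Prop :=
  forall (a : C) (X Y : op I),
    F [ffun p => a * X p + Y p] = [ffun p => a * F X p + F Y p].

Definition id_tens (K I J : finType) (F : linmap I J) : linmap (K * I)%type (K * J)%type :=
  fun X => [ffun p =>
    F [ffun q => X ((p.1.1, q.1), (p.2.1, q.2))] (p.1.2, p.2.2)].

Definition tens_id (K I J : finType) (F : linmap I J) : linmap (I * K)%type (J * K)%type :=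
  fun X => [ffun p =>
    F [ffun q => X ((q.1, p.1.2), (q.2, p.2.2))] (p.1.1, p.2.1)].

Definition completely_positive (I J : finType) (F : linmap I J) : Prop :=
  forall (K : finType) (X : op (K * I)%type), psd X -> psd (@id_tens K I J F X).

Definition trace_preserving (I J : finType) (F : linmap I J) : Prop :=
  forall X : op I, trace (F X) = trace X.

Definition cptp (I J : finType) (F : linmap I J) : Prop :=
  [/\ linear_map F, completely_positive F & trace_preserving F].

Definition isometry (I J : finType) (W : {ffun (J * I)%type -> C}) : Prop :=
  forall a b : I, \sum_(x : J) (W (x, a))^* * W (x, b) = (a == b)%:R.

Definition isometry_channel (I J : finType) (V : linmap I J) : Prop :=
  exists W : {ffun (J * I)%type -> C}, isometry W /\
    forall X : op I, V X =
      [ffun p => \sum_(a : I) \sum_(b : I) W (p.1, a) * X (a, b) * (W (p.2, b))^*].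

(* The composition E^{RB->B} o V^{A'->RA} in CPTP(A'B -> AB):
   first V (x) id_B : A'B -> (RA)B, then id_A (x) E acting on the R and B
   factors (the identity acting on A). *)
Definition compose_RB (A' A B R : finType)
    (E : linmap (R * B)%type B) (V : linmap A' (R * A)%type) : linmap (A' * B)%type (A * B)%type :=
  fun X =>
    let Y := @tens_id B A' (R * A)%type V X in
    [ffun p =>
      E [ffun q => Y (((q.1.1, p.1.1), q.1.2), ((q.2.1, p.2.1), q.2.2))]
        (p.1.2, p.2.2)].

Definition cond_unital (R B : finType) (E : linmap (R * B)%type B) : Prop :=
  forall tau : op R, density tau -> E (optens tau (mixed B)) = mixed B.

Definition no_signalling_B_to_A (A' A B : finType) (N : linmap (A' * B)%type (A * B)%type)
  : Prop :=
  exists (R : finType) (V' : linmap A' (R * A)%type) (E' : linmap (R * B)%type B),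
    [/\ isometry_channel V', cptp E' & forall X, N X = compose_RB E' V' X].

Definition cond_mixing (A' A B : finType) (N : linmap (A' * B)%type (A * B)%type) : Prop :=
  no_signalling_B_to_A N /\
  forall rho : op A', density rho ->
    exists sigma : op A, density sigma /\
      N (optens rho (mixed B)) = optens sigma (mixed B).

End Quantum.

(* Main.v *)
Require Import Defs.
From HB Require Import structures.
From mathcomp Require Import all_boot all_order all_algebra.
From mathcomp Require Import ring.

Module Helpers.
Set Implicit Arguments. Unset Strict Implicit. Unset Printing Implicit Defensive.
Import Order.TTheory GRing.Theory Num.Theory.
Local Open Scope ring_scope.
Local Open Scope sesquilinear_scope.

Lemma psd_rank1 (C : numClosedFieldType) (I : finType) (w : I -> C) :
  psd [ffun p : I * I => w p.1 * (w p.2)^*].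
Proof.
move=> v.
have -> : \sum_i \sum_j (v i)^* * [ffun p : I * I => w p.1 * (w p.2)^*] (i, j) * v j
   = (\sum_i (v i)^* * w i) * (\sum_i (v i)^* * w i)^*.
  rewrite rmorph_sum mulr_suml; apply: eq_bigr => i _.
  rewrite mulr_sumr; apply: eq_bigr => j _.
  by rewrite ffunE /= rmorphM /= conjCK; ring.
exact: mul_conjC_ge0.
Qed.

Lemma psd_conj (C : numClosedFieldType) (I J : finType) (L : J -> I -> C) (X : op C I) :
  psd X ->
  psd [ffun p : J * J => \sum_s \sum_t L p.1 s * X (s, t) * (L p.2 t)^*].
Proof.
move=> hX v.
pose y t := \sum_u (L u t)^* * v u.
have -> : \sum_i \sum_j (v i)^* *
      [ffun p : J * J => \sum_s \sum_t L p.1 s * X (s, t) * (L p.2 t)^*] (i, j) * v j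
   = \sum_s \sum_t (y s)^* * X (s, t) * y t.
  transitivity (\sum_i \sum_j \sum_s \sum_t (v i)^* * L i s * X (s, t) * (L j t)^* * v j).
    apply: eq_bigr => i _; apply: eq_bigr => j _.
    rewrite ffunE /= mulr_sumr mulr_suml; apply: eq_bigr => s _.
    rewrite mulr_sumr mulr_suml; apply: eq_bigr => t _; ring.
  under eq_bigr do rewrite exchange_big /=.
  rewrite exchange_big /=; apply: eq_bigr => s _.
  under eq_bigr do rewrite exchange_big /=.
  rewrite exchange_big /=; apply: eq_bigr => t _.
  rewrite /y rmorph_sum /= !mulr_suml; apply: eq_bigr => i _.
  rewrite !mulr_sumr; apply: eq_bigr => j _.
  rewrite rmorphM /= conjCK; ring.
exact: hX.
Qed.


Definition rank1 (C : numClosedFieldType) (I : finType) (w1 w2 : I -> C) : op C I :=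
  [ffun p => w1 p.1 * (w2 p.2)^*].

Definition lclosed (C : numClosedFieldType) (I : finType) (P : op C I -> Prop) :=
  P [ffun _ => 0] /\
  forall a X Y, P X -> P Y -> P [ffun p => a * X p + Y p].

Lemma lclosed_scale (C : numClosedFieldType) (I : finType) (P : op C I -> Prop) :
  lclosed P -> forall a X, P X -> P [ffun p => a * X p].
Proof.
move=> [h0 hc] a X hX.
have -> : [ffun p => a * X p] = [ffun p => a * X p + [ffun _ => 0] p].
  by apply/ffunP => p; rewrite !ffunE addr0.
exact: hc.
Qed.

Lemma lclosed_sum (C : numClosedFieldType) (I T : finType) (P : op C I -> Prop) :
  lclosed P -> forall (l : seq T) (c : T -> C) (F : T -> op C I),
  (forall s, P (F s)) -> P [ffun p => \sum_(s <- l) c s * F s p].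
Proof.
move=> [h0 hc] l c F hF; elim: l => [|s l IH].
  have -> : [ffun p => \sum_(s <- [::]) c s * F s p] = [ffun _ => 0 : C] .
    by apply/ffunP => p; rewrite !ffunE big_nil.
  exact: h0.
have -> : [ffun p => \sum_(s0 <- s :: l) c s0 * F s0 p] =
   [ffun p => c s * F s p + [ffun p => \sum_(s <- l) c s * F s p] p].
  by apply/ffunP => p; rewrite !ffunE big_cons.
exact: hc.
Qed.

Lemma rank1_self_P (C : numClosedFieldType) (I : finType) (P : op C I -> Prop) :
  lclosed P -> (forall rho, density rho -> P rho) -> forall v, P (rank1 v v).
Proof.
move=> hP hD v.
set t := \sum_i v i * (v i)^*.
have t_ge0 : 0 <= t by apply: sumr_ge0 => i _; exact: mul_conjC_ge0.
have [t0|tn0] := eqVneq t 0.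
  have v0 : forall i, v i = 0.
    move=> i; move/eqP: t0; rewrite psumr_eq0; last by move=> j _; exact: mul_conjC_ge0.
    by move/allP/(_ i (mem_index_enum i))/implyP/(_ isT); rewrite mul_conjC_eq0 => /eqP.
  have -> : rank1 v v = [ffun _ => 0].
    by apply/ffunP => p; rewrite !ffunE v0 mul0r.
  exact: hP.1.
have -> : rank1 v v = [ffun p => t * [ffun p => t^-1 * rank1 v v p] p].
  by apply/ffunP => p; rewrite !ffunE mulrA mulfV // mul1r.
apply: lclosed_scale => //; apply: hD; split.
  move=> x.
  have -> : \sum_i \sum_j (x i)^* * [ffun p => t^-1 * rank1 v v p] (i, j) * x j =
      t^-1 * (\sum_i \sum_j (x i)^* * rank1 v v (i, j) * x j).
    rewrite mulr_sumr; apply: eq_bigr => i _; rewrite mulr_sumr; apply: eq_bigr => j _.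
    by rewrite ffunE; ring.
  by apply: mulr_ge0; [rewrite invr_ge0 | exact: psd_rank1].
rewrite /trace.
under eq_bigr do rewrite ffunE.
rewrite -mulr_sumr; under eq_bigr do rewrite ffunE /=.
have -> : (\sum_i v (i, i).1 * (v (i, i).2)^*) = t by [].
exact: mulVf.
Qed.

Lemma polar_entry (C : numClosedFieldType) (x1 x2 y1 y2 : C) :
  x1 * y2^* = 4%:R^-1 * ((x1 + x2) * (y1 + y2)^* + (-1) * ((x1 - x2) * (y1 - y2)^*)
     + 'i * ((x1 + 'i * x2) * (y1 + 'i * y2)^*) + (- 'i) * ((x1 - 'i * x2) * (y1 - 'i * y2)^*)).
Proof.
rewrite !rmorphD !rmorphN !rmorphM /= conjCi.
set i := 'i.
have e : forall a b c d : C,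
  (a + b) * (c + d) + (-1) * ((a - b) * (c - d)) + i * ((a + i * b) * (c + - i * d))
  + - i * ((a - i * b) * (c - - i * d)) = 4%:R * (a * d) + (i ^+ 2 + 1) * (2%:R * (b * c - a * d)).
  by move=> a b c d; ring.
rewrite e /i sqrCi addNr mul0r addr0; field.
by [].

Qed.

Lemma rank1_P (C : numClosedFieldType) (I : finType) (P : op C I -> Prop) :
  lclosed P -> (forall rho, density rho -> P rho) -> forall w1 w2, P (rank1 w1 w2).
Proof.
move=> hP hD w1 w2.
pose r c := rank1 (fun k => w1 k + c * w2 k) (fun k => w1 k + c * w2 k).
have hr : forall c, P (r c) by move=> c; exact: rank1_self_P.
have -> : rank1 w1 w2 = [ffun p => 4%:R^-1 *
   [ffun p => (- 'i) * r (- 'i) p + [ffun p => 'i * r 'i p +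
      [ffun p => (-1) * r (-1) p + r 1 p] p] p] p].
  apply/ffunP => p; rewrite !ffunE /=.
  rewrite (polar_entry (w1 p.1) (w2 p.1) (w1 p.2) (w2 p.2)).
  congr (_ * _).
  by rewrite !mulN1r !mul1r !mulNr; ring.
apply: lclosed_scale => //; do 3 (apply: hP.2 => //).
Qed.

Lemma span_density (C : numClosedFieldType) (I : finType) (P : op C I -> Prop) :
  lclosed P -> (forall rho, density rho -> P rho) -> forall X, P X.
Proof.
move=> hP hD X.
pose d (k : I) := fun m : I => ((m == k)%:R : C).
have -> : X = [ffun p => \sum_(s <- index_enum {: I * I}) X s * rank1 (d s.1) (d s.2) p].
  apply/ffunP => p; rewrite ffunE (bigD1 p) //= big1 ?addr0.
    by rewrite ffunE /d /= !eqxx conjC_nat !mulr1.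
  move=> s hs; rewrite ffunE /d /= conjC_nat -natrM mulnb.
  case: p hs => p1 p2; case: s => s1 s2 /= hs.
  case: eqP => [e1|]; case: eqP => [e2|] //=; rewrite ?mulr0 //.
  by move: hs; rewrite e1 e2 eqxx.
apply: lclosed_sum => // s; exact: rank1_P.
Qed.


Definition tauW (C : numClosedFieldType) (A' A R : finType)
  (W : {ffun ((R * A) * A')%type -> C}) (rho : op C A') (a a' : A) : op C R :=
  [ffun q => \sum_i \sum_j W ((q.1, a), i) * rho (i, j) * (W ((q.2, a'), j))^*].

Lemma compose_optens (C : numClosedFieldType) (A' A B R : finType)
  (E : linmap C (R * B)%type B) (V : linmap C A' (R * A)%type)
  (W : {ffun ((R * A) * A')%type -> C}) :
  (forall X : op C A', V X =
      [ffun p => \sum_(a : A') \sum_(b : A') W (p.1, a) * X (a, b) * (W (p.2, b))^*]) ->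
  forall (rho : op C A') (Y : op C B),
  compose_RB E V (optens rho Y) =
  [ffun p => E (optens (tauW W rho p.1.1 p.2.1) Y) (p.1.2, p.2.2)].
Proof.
move=> hV rho Y; apply/ffunP => p; rewrite /compose_RB !ffunE.
congr (E _ _); apply/ffunP => q; rewrite /tens_id !ffunE hV !ffunE /=.
rewrite mulr_suml; apply: eq_bigr => i _; rewrite mulr_suml; apply: eq_bigr => j _.
by rewrite !ffunE /=; ring.
Qed.

Lemma lin0 (C : numClosedFieldType) (I J : finType) (F : linmap C I J) :
  linear_map F -> F [ffun _ => 0] = [ffun _ => 0].
Proof.
move=> hF; have := hF (-1) [ffun _ => 0] [ffun _ => 0].
have -> : [ffun p => -1 * [ffun _ => (0 : C)] p + [ffun _ => 0] p] = [ffun _ => 0] :> op C I.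
  by apply/ffunP => p; rewrite !ffunE mulr0 addr0.
move=> ->; apply/ffunP => p; rewrite !ffunE; ring.
Qed.

Lemma optens0 (C : numClosedFieldType) (I J : finType) (Y : op C J) :
  optens [ffun _ => 0] Y = [ffun _ => 0] :> op C (I * J)%type.
Proof. by apply/ffunP => p; rewrite !ffunE mul0r. Qed.

Lemma optensL (C : numClosedFieldType) (I J : finType) (Y : op C J) a (X1 X2 : op C I) :
  optens [ffun p => a * X1 p + X2 p] Y = [ffun p => a * optens X1 Y p + optens X2 Y p].
Proof. by apply/ffunP => p; rewrite !ffunE; ring. Qed.

Lemma trace_mixed (C : numClosedFieldType) (B : finType) : (0 < #|B|)%N ->
  trace (mixed C B) = 1.
Proof.
move=> hB; rewrite /trace; under eq_bigr do rewrite ffunE /= eqxx.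
rewrite sumr_const; change ((1%:R / #|B|%:R) *+ #|B| = 1 :> C).
by rewrite -mulr_natr mul1r mulVf // pnatr_eq0 -lt0n.
Qed.


Lemma cu_all (C : numClosedFieldType) (R B : finType) (E : linmap C (R * B)%type B) :
  (0 < #|B|)%N -> cptp E -> cond_unital E ->
  forall X : op C R, E (optens X (mixed C B)) = [ffun p => trace X * mixed C B p].
Proof.
move=> hB [hl _ _] hu.
apply: span_density; last first.
  move=> rho hd; rewrite hu //; case: hd => _ ->; apply/ffunP => p; rewrite !ffunE mul1r //.
split.
  rewrite optens0 lin0 //; apply/ffunP => p; rewrite !ffunE /trace.
  by rewrite big1 ?mul0r // => i _; rewrite ffunE.
move=> a X Y hX hY; rewrite optensL hl hX hY; apply/ffunP => p; rewrite !ffunE.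
rewrite /trace; under [X in _ = X * _]eq_bigr do rewrite ffunE.
by rewrite big_split /= -mulr_sumr; ring.
Qed.

Lemma backward_mix (C : numClosedFieldType) (A' A B R : finType)
  (E : linmap C (R * B)%type B) (V : linmap C A' (R * A)%type)
  (W : {ffun ((R * A) * A')%type -> C}) :
  (0 < #|B|)%N -> Defs.isometry W ->
  (forall X : op C A', V X =
      [ffun p => \sum_(a : A') \sum_(b : A') W (p.1, a) * X (a, b) * (W (p.2, b))^*]) ->
  cptp E -> cond_unital E ->
  forall rho, density rho -> exists sigma : op C A, density sigma /\
    compose_RB E V (optens rho (mixed C B)) = optens sigma (mixed C B).
Proof.
move=> hB hW hV hE hu rho [hpsd htr].
pose sigma : op C A := [ffun p => \sum_r tauW W rho p.1 p.2 (r, r)].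
exists sigma; split; last first.
  rewrite (compose_optens _ hV); apply/ffunP => p; rewrite ffunE (cu_all hB hE hu) !ffunE.
  by [].
split.
  move=> v.
  have -> : \sum_a \sum_a' (v a)^* * sigma (a, a') * v a' =
     \sum_r \sum_a \sum_a' (v a)^* * tauW W rho a a' (r, r) * v a'.
    under eq_bigr do under eq_bigr do rewrite ffunE /= mulr_sumr mulr_suml.
    under eq_bigr do rewrite exchange_big /=.
    by rewrite exchange_big.
  apply: sumr_ge0 => r _.
  have := psd_conj (fun (a : A) (i : A') => W ((r, a), i)) hpsd v.
  congr (_ <= _); apply: eq_bigr => a _; apply: eq_bigr => a' _; by rewrite !ffunE.
rewrite -htr /trace.
transitivity (\sum_i \sum_j rho (i, j) * \sum_(x : R * A) (W (x, j))^* * W (x, i)).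
  transitivity (\sum_r \sum_a \sum_i \sum_j W ((r, a), i) * rho (i, j) * (W ((r, a), j))^*).
    rewrite exchange_big /=; apply: eq_bigr => a _; rewrite ffunE; apply: eq_bigr => r _.
    by rewrite ffunE.
  rewrite pair_bigA /=.
  rewrite exchange_big /=; apply: eq_bigr => i _.
  rewrite exchange_big /=; apply: eq_bigr => j _.
  rewrite mulr_sumr; apply: eq_bigr => [[r a]] _ /=; ring.
apply: eq_bigr => i _; rewrite [LHS](bigD1 i) //= [X in _ + X]big1 ?addr0.
  by rewrite hW eqxx mulr1.
by move=> j hj; rewrite hW (negbTE hj) mulr0.
Qed.


Lemma sum_enum_rank (C : numClosedFieldType) (R : finType) (F : 'I_#|R| -> C) :
  \sum_(x : 'I_#|R|) F x = \sum_(r : R) F (enum_rank r).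
Proof.
by rewrite (reindex (@enum_rank R)) //; apply: onW_bij; exact: enum_rank_bij.
Qed.

Lemma gs (C : numClosedFieldType) (R S : finType) (w : S -> R -> C) :
  exists (n : nat) (q : 'I_n -> R -> C) (c : S -> 'I_n -> C) (d : 'I_n -> S -> C),
  [/\ forall k l, \sum_r q k r * (q l r)^* = (k == l)%:R,
      forall s r, w s r = \sum_k c s k * q k r &
      forall k r, q k r = \sum_s d k s * w s r].
Proof.
pose U : 'M[C]_(#|S|, #|R|) := \matrix_(i, j) w (enum_val i) (enum_val j).
pose Q := schmidt (row_base U).
have eQ : (Q :=: U)%MS := eqmx_trans (eqmx_schmidt_free (row_base_free U)) (eq_row_base U).
have uQ : Q *m Q^t* = 1%:M.
  by apply/eqP; exact: (schmidt_unitarymx (row_base U) (rank_leq_col U)).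
exists (\rank U), (fun k r => Q k (enum_rank r)),
  (fun s k => (U *m pinvmx Q) (enum_rank s) k),
  (fun k s => (Q *m pinvmx U) k (enum_rank s)); split.
- move=> k l; move/matrixP: uQ => /(_ k l); rewrite !mxE => <-.
  by rewrite sum_enum_rank; apply: eq_bigr => r _; rewrite !mxE.
- move=> s r.
  have hU : (U <= Q)%MS by rewrite eQ.
  move/matrixP: (mulmxKpV hU) => /(_ (enum_rank s) (enum_rank r)).
  by rewrite !mxE !enum_rankK => <-.
- move=> k r.
  have hQ : (Q <= U)%MS by rewrite eQ.
  move/matrixP: (mulmxKpV hQ) => /(_ k (enum_rank r)); rewrite !mxE => <-.
  rewrite sum_enum_rank; apply: eq_bigr => s _; by rewrite !mxE !enum_rankK.
Qed.


Lemma sum_pair (C : numClosedFieldType) (I J : finType) (F : (I * J)%type -> C) :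
  \sum_(x : I * J) F x = \sum_i \sum_j F (i, j).
Proof. by rewrite pair_bigA; apply: eq_bigr => [[i j]]. Qed.

Lemma sum_delta (C : numClosedFieldType) (I : finType) (F : I -> C) (i : I) :
  \sum_k F k * (k == i)%:R = F i.
Proof.
rewrite (bigD1 i) //= eqxx mulr1 big1 ?addr0 // => k hk.
by rewrite (negbTE hk) mulr0.
Qed.

Lemma ip (C : numClosedFieldType) (R S : finType) n (q : 'I_n -> R -> C)
  (w : S -> R -> C) (c : S -> 'I_n -> C) :
  (forall k l, \sum_r q k r * (q l r)^* = (k == l)%:R) ->
  (forall s r, w s r = \sum_k c s k * q k r) ->
  forall s t, \sum_r (w s r)^* * w t r = \sum_k (c s k)^* * c t k.
Proof.
move=> hq hc s t.
transitivity (\sum_k \sum_l (c s k)^* * c t l * (\sum_r q l r * (q k r)^*)).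
  under eq_bigr do rewrite !hc rmorph_sum mulr_suml.
  rewrite exchange_big /=; apply: eq_bigr => k _.
  under eq_bigr do rewrite mulr_sumr.
  rewrite exchange_big /=; apply: eq_bigr => l _.
  rewrite mulr_sumr; apply: eq_bigr => r _; rewrite rmorphM /=; ring.
apply: eq_bigr => k _; under eq_bigr do rewrite hq.
rewrite -(sum_delta (fun l => (c s k)^* * c t l) k) /=.
by apply: eq_bigr => l _; rewrite eq_sym.
Qed.

Lemma sandwich (C : numClosedFieldType) (K I : finType) (a b : K -> C) (f g : K -> I -> C)
   (Z : I -> I -> C) :
  \sum_k \sum_l a k * (\sum_i \sum_j f k i * Z i j * (g l j)^*) * (b l)^* =
  \sum_i \sum_j (\sum_k a k * f k i) * Z i j * (\sum_l b l * g l j)^*.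
Proof.
transitivity (\sum_k \sum_l \sum_i \sum_j a k * f k i * Z i j * ((g l j)^* * (b l)^*)).
  apply: eq_bigr => k _; apply: eq_bigr => l _.
  rewrite mulr_sumr mulr_suml; apply: eq_bigr => i _.
  rewrite mulr_sumr mulr_suml; apply: eq_bigr => j _; ring.
under eq_bigr do rewrite exchange_big /=.
rewrite exchange_big /=; apply: eq_bigr => i _.
under eq_bigr do rewrite exchange_big /=.
rewrite exchange_big /=; apply: eq_bigr => j _.
rewrite rmorph_sum /= mulr_suml mulr_suml; apply: eq_bigr => k _.
rewrite mulr_sumr; apply: eq_bigr => l _; rewrite rmorphM /=; ring.
Qed.


Definition AdM (C : numClosedFieldType) (R B : finType) n (q : 'I_n -> R -> C)
  (Y : op C ('I_n * B)%type) : op C (R * B)%type :=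
  [ffun p => \sum_k \sum_l q k p.1.1 * Y ((k, p.1.2), (l, p.2.2)) * (q l p.2.1)^*].

Definition Wn (C : numClosedFieldType) (A' A : finType) n (c : (A * A')%type -> 'I_n -> C) :
  {ffun (('I_n * A) * A')%type -> C} := [ffun p => c (p.1.2, p.2) p.1.1].

Definition Adf (C : numClosedFieldType) (A' K : finType) (W : {ffun (K * A')%type -> C}) :
  linmap C A' K :=
  fun X => [ffun p => \sum_(a : A') \sum_(b : A') W (p.1, a) * X (a, b) * (W (p.2, b))^*].

Lemma iso_n (C : numClosedFieldType) (A' A R : finType) (W : {ffun ((R * A) * A')%type -> C})
  n (q : 'I_n -> R -> C) (c : (A * A')%type -> 'I_n -> C) :
  Defs.isometry W ->
  (forall k l, \sum_r q k r * (q l r)^* = (k == l)%:R) ->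
  (forall s r, W ((r, s.1), s.2) = \sum_k c s k * q k r) ->
  Defs.isometry (Wn c).
Proof.
move=> hW hq hc i j; rewrite -hW sum_pair exchange_big /=.
rewrite [RHS]sum_pair [RHS]exchange_big /=; apply: eq_bigr => a _.
under eq_bigr do rewrite !ffunE /=.
by rewrite -(ip hq hc (a, i) (a, j)).
Qed.

Lemma compose_eq (C : numClosedFieldType) (A' A B R : finType)
  (W : {ffun ((R * A) * A')%type -> C}) (E : linmap C (R * B)%type B)
  n (q : 'I_n -> R -> C) (c : (A * A')%type -> 'I_n -> C) :
  (forall s r, W ((r, s.1), s.2) = \sum_k c s k * q k r) ->
  forall X, compose_RB (fun Y => E (AdM q Y)) (Adf (Wn c)) X = compose_RB E (Adf W) X.
Proof.
move=> hc X; apply/ffunP => p; rewrite /compose_RB !ffunE.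
congr (E _ _); apply/ffunP => q0; rewrite /AdM /tens_id !ffunE /=.
under eq_bigr do under eq_bigr do rewrite !ffunE /=.
rewrite (sandwich (fun k => q k q0.1.1) (fun l => q l q0.2.1)
  (fun k i => Wn c ((k, p.1.1), i)) (fun l j => Wn c ((l, p.2.1), j))
  (fun i j => [ffun q' => X ((q'.1, q0.1.2), (q'.2, q0.2.2))] (i, j))).
apply: eq_bigr => i _; apply: eq_bigr => j _.
rewrite (hc (p.1.1, i)) (hc (p.2.1, j)).
congr (_ * _ * _^*).
  by apply: eq_bigr => k _; rewrite ffunE mulrC.
by apply: eq_bigr => k _; rewrite ffunE mulrC.
Qed.


Lemma AdM_lin (C : numClosedFieldType) (R B : finType) n (q : 'I_n -> R -> C) a
  (X Y : op C ('I_n * B)%type) :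
  AdM q [ffun p => a * X p + Y p] = [ffun p => a * AdM q X p + AdM q Y p].
Proof.
apply/ffunP => p; rewrite !ffunE mulr_sumr -big_split /=; apply: eq_bigr => k _.
rewrite mulr_sumr -big_split /=; apply: eq_bigr => l _; rewrite !ffunE; ring.
Qed.

Lemma trace_AdM (C : numClosedFieldType) (R B : finType) n (q : 'I_n -> R -> C)
  (Y : op C ('I_n * B)%type) :
  (forall k l, \sum_r q k r * (q l r)^* = (k == l)%:R) ->
  trace (AdM q Y) = trace Y.
Proof.
move=> hq; rewrite /trace [RHS]sum_pair [LHS]sum_pair [RHS]exchange_big [LHS]exchange_big /=.
apply: eq_bigr => b _.
transitivity (\sum_k \sum_l Y ((k, b), (l, b)) * \sum_r q k r * (q l r)^*).
  under eq_bigr do rewrite ffunE /=.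
  rewrite exchange_big /=; apply: eq_bigr => k _.
  rewrite exchange_big /=; apply: eq_bigr => l _.
  rewrite mulr_sumr; apply: eq_bigr => r _; ring.
apply: eq_bigr => k _; under eq_bigr do rewrite hq eq_sym.
exact: sum_delta.
Qed.

Definition Lh (C : numClosedFieldType) (K R B : finType) n (h : 'I_n -> R -> C)
  (u : (K * (R * B))%type) (t : (K * ('I_n * B))%type) : C :=
  (t.1 == u.1)%:R * (t.2.2 == u.2.2)%:R * h t.2.1 u.2.1.

Lemma collapse (C : numClosedFieldType) (K R B : finType) n (h : 'I_n -> R -> C)
  (u : (K * (R * B))%type) (G : (K * ('I_n * B))%type -> C) :
  \sum_t Lh h u t * G t = \sum_k h k u.2.1 * G (u.1, (k, u.2.2)).
Proof.
rewrite sum_pair.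
transitivity (\sum_k0 (\sum_k \sum_b h k u.2.1 * G (k0, (k, b)) * (b == u.2.2)%:R) * (k0 == u.1)%:R).
  apply: eq_bigr => k0 _; rewrite sum_pair mulr_suml; apply: eq_bigr => k _.
  rewrite mulr_suml; apply: eq_bigr => b _; rewrite /Lh /=; ring.
rewrite sum_delta; apply: eq_bigr => k _.
under eq_bigr do rewrite -mulrA.
by rewrite -mulr_sumr sum_delta.
Qed.

Lemma cptp_n (C : numClosedFieldType) (R B : finType) n (q : 'I_n -> R -> C)
  (E : linmap C (R * B)%type B) :
  (forall k l, \sum_r q k r * (q l r)^* = (k == l)%:R) ->
  cptp E -> cptp (fun Y => E (AdM q Y)).
Proof.
move=> hq [hl hcp htp]; split.
- by move=> a X Y; rewrite AdM_lin hl.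
- move=> K X hX.
  pose Z := [ffun p : (K * (R * B)) * (K * (R * B)) =>
    \sum_s \sum_t Lh q p.1 s * X (s, t) * (Lh q p.2 t)^*].
  have -> : id_tens (fun Y => E (AdM q Y)) X = id_tens E Z.
    apply/ffunP => p; rewrite /id_tens !ffunE; congr (E _ _).
    apply/ffunP => u; rewrite !ffunE /=.
    under [RHS]eq_bigr do under eq_bigr do rewrite -mulrA.
    under [RHS]eq_bigr do rewrite -mulr_sumr.
    rewrite (collapse q (p.1.1, u.1) (fun s => \sum_t X (s, t) * (Lh q (p.2.1, u.2) t)^*)) /=.
    apply: eq_bigr => k _.
    under eq_bigr do rewrite -mulrA.
    rewrite -mulr_sumr; congr (_ * _).
    have e : forall t, (Lh q (p.2.1, u.2) t)^* = Lh (fun k x => (q k x)^*) (p.2.1, u.2) t.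
      by move=> t; rewrite /Lh !rmorphM /= !conjC_nat.
    under [RHS]eq_bigr do rewrite e mulrC.
    rewrite (collapse (fun k x => (q k x)^*) (p.2.1, u.2) (fun t => X ((p.1.1, (k, u.1.2)), t))) /=.
    apply: eq_bigr => l _; rewrite ffunE mulrC //.
  by apply: hcp; exact: psd_conj.
- by move=> Y; rewrite htp trace_AdM.
Qed.


Definition Gp (C : numClosedFieldType) (R B : finType) (E : linmap C (R * B)%type B)
  (X : op C R) := exists c, E (optens X (mixed C B)) = [ffun p => c * mixed C B p].

Lemma Gp_closed (C : numClosedFieldType) (R B : finType) (E : linmap C (R * B)%type B) :
  linear_map E -> lclosed (Gp E).
Proof.
move=> hl; split.
  exists 0; rewrite optens0 lin0 //; apply/ffunP => p; rewrite !ffunE mul0r //.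
move=> a X Y [c1 h1] [c2 h2]; exists (a * c1 + c2).
rewrite optensL hl h1 h2; apply/ffunP => p; rewrite !ffunE; ring.
Qed.

Lemma trace_optens (C : numClosedFieldType) (I J : finType) (X : op C I) (Y : op C J) :
  trace (optens X Y) = trace X * trace Y.
Proof.
rewrite /trace sum_pair mulr_suml; apply: eq_bigr => i _.
rewrite mulr_sumr; apply: eq_bigr => j _; by rewrite ffunE.
Qed.

Lemma Gp_tauW (C : numClosedFieldType) (A' A B R : finType)
  (W : {ffun ((R * A) * A')%type -> C}) (E : linmap C (R * B)%type B) :
  linear_map E ->
  (forall a a' (rho : op C A'), density rho -> Gp E (tauW W rho a a')) ->
  forall a a' i j, Gp E (rank1 (fun r => W ((r, a), i)) (fun r => W ((r, a'), j))).
Proof.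
move=> hl hmix a a' i j.
have hall : forall rho, Gp E (tauW W rho a a').
  apply: (span_density (P := fun rho => Gp E (tauW W rho a a'))); last exact: hmix.
  split.
    have -> : tauW W [ffun _ => 0] a a' = [ffun _ => 0].
      apply/ffunP => p; rewrite !ffunE big1 // => k _; rewrite big1 // => l _.
      by rewrite ffunE mulr0 mul0r.
    exact: (Gp_closed hl).1.
  move=> b X Y hX hY.
  have -> : tauW W [ffun p => b * X p + Y p] a a' =
      [ffun p => b * tauW W X a a' p + tauW W Y a a' p].
    apply/ffunP => p; rewrite !ffunE mulr_sumr -big_split /=; apply: eq_bigr => k _.
    rewrite mulr_sumr -big_split /=; apply: eq_bigr => l _; rewrite ffunE; ring.
  exact: (Gp_closed hl).2.
suff -> : rank1 (fun r => W ((r, a), i)) (fun r => W ((r, a'), j)) =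
   tauW W [ffun p => ((p.1 == i)%:R : C) * ((p.2 == j)%:R)] a a' by apply: hall.
apply/ffunP => p; rewrite !ffunE; apply: esym.
transitivity (\sum_k (\sum_l (W ((p.1, a), k) * (W ((p.2, a'), l))^* * (k == i)%:R)
   * (l == j)%:R)).
  apply: eq_bigr => k _; apply: eq_bigr => l _; rewrite ffunE /=; ring.
under eq_bigr do rewrite sum_delta.
rewrite -(sum_delta (fun k => W ((p.1, a), k) * (W ((p.2, a'), j))^*) i).
by apply: eq_bigr => k _; rewrite mulrAC.
Qed.

Lemma cu_n (C : numClosedFieldType) (A' A B R : finType)
  (W : {ffun ((R * A) * A')%type -> C}) (E : linmap C (R * B)%type B)
  n (q : 'I_n -> R -> C) (d : 'I_n -> (A * A')%type -> C) :
  (0 < #|B|)%N -> cptp E ->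
  (forall k l, \sum_r q k r * (q l r)^* = (k == l)%:R) ->
  (forall k r, q k r = \sum_s d k s * W ((r, s.1), s.2)) ->
  (forall a a' (rho : op C A'), density rho -> Gp E (tauW W rho a a')) ->
  cond_unital (fun Y => E (AdM q Y)).
Proof.
move=> hB [hl hcp htp] hq hd hmix tau [_ tr1].
pose Mt : op C R := [ffun p => \sum_k \sum_l q k p.1 * tau (k, l) * (q l p.2)^*].
have eA : AdM q (optens tau (mixed C B)) = optens Mt (mixed C B).
  apply/ffunP => p; rewrite !ffunE mulr_suml; apply: eq_bigr => k _.
  rewrite mulr_suml; apply: eq_bigr => l _; rewrite !ffunE; ring.
have hq2 : forall k l, Gp E (rank1 (q k) (q l)).
  move=> k l.
  have -> : rank1 (q k) (q l) = [ffun p => \sum_(st <- index_enum {: (A * A') * (A * A')})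
      (d k st.1 * (d l st.2)^*) *
      rank1 (fun r => W ((r, st.1.1), st.1.2)) (fun r => W ((r, st.2.1), st.2.2)) p].
    apply/ffunP => p; rewrite !ffunE hd hd rmorph_sum mulr_suml.
    rewrite (sum_pair (fun st : (A * A') * (A * A') => _)).
    apply: eq_bigr => s _; rewrite mulr_sumr; apply: eq_bigr => t _.
    rewrite ffunE rmorphM /=; ring.
  apply: lclosed_sum; first exact: Gp_closed.
  by move=> st; apply: (Gp_tauW hl hmix).
have hG : Gp E Mt.
  have -> : Mt = [ffun p => \sum_(kl <- index_enum {: 'I_n * 'I_n})
      tau kl * rank1 (q kl.1) (q kl.2) p].
    apply/ffunP => p; rewrite !ffunE.
    rewrite (sum_pair (fun kl : 'I_n * 'I_n => _)).
    apply: eq_bigr => k _; apply: eq_bigr => l _; rewrite ffunE; ring.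
  apply: lclosed_sum; first exact: Gp_closed.
  by move=> kl; apply: hq2.
case: hG => c hc.
have trM : trace Mt = 1.
  rewrite -tr1 /trace.
  transitivity (\sum_k \sum_l tau (k, l) * \sum_r q k r * (q l r)^*).
    under eq_bigr do rewrite ffunE /=.
    rewrite exchange_big /=; apply: eq_bigr => k _.
    rewrite exchange_big /=; apply: eq_bigr => l _.
    rewrite mulr_sumr; apply: eq_bigr => r _; ring.
  apply: eq_bigr => k _; under eq_bigr do rewrite hq eq_sym.
  exact: sum_delta.
have ec : c = 1.
  have := htp (optens Mt (mixed C B)); rewrite hc trace_optens trM trace_mixed // mul1r.
  rewrite /trace; under eq_bigr do rewrite ffunE.
  by rewrite -mulr_sumr; move: (trace_mixed C hB); rewrite /trace => ->; rewrite mulr1.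
rewrite eA hc ec; apply/ffunP => p; rewrite ffunE mul1r //.
Qed.

Lemma compose_ext (C : numClosedFieldType) (A' A B R : finType)
  (E : linmap C (R * B)%type B) (V1 V2 : linmap C A' (R * A)%type) :
  (forall X, V1 X = V2 X) -> forall X, compose_RB E V1 X = compose_RB E V2 X.
Proof.
move=> hV X; apply/ffunP => p; rewrite /compose_RB !ffunE; congr (E _ _).
by apply/ffunP => q0; rewrite /tens_id !ffunE hV.
Qed.

End Helpers.
Unset Implicit Arguments. Set Strict Implicit.
Import Helpers.

Theorem theorem14 (C : numClosedFieldType) (A' A B : finType)
  (hA' : 0 < #|A'|) (hA : 0 < #|A|) (hB : 0 < #|B|)
  (N : linmap C (A' * B)%type (A * B)%type) (hN : cptp N) :
  cond_mixing N <->
  exists (R : finType) (V : linmap C A' (R * A)%type) (E : linmap C (R * B)%type B),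
    [/\ isometry_channel V, cptp E, cond_unital E &
        forall X, N X = compose_RB E V X].
Proof.
split.
- move=> [[R [V' [E' [[W [hW hV']] hE' hNeq]]]] hmixN].
  have [n [q [c [d [hq hc hd]]]]] := gs (fun (s : (A * A')%type) (r : R) => W ((r, s.1), s.2)).
  have hmix : forall a a' (rho : op C A'), density rho -> Gp E' (tauW W rho a a').
    move=> a a' rho hrho; have [sigma [_ e]] := hmixN rho hrho.
    exists (sigma (a, a')); apply/ffunP => b.
    move: e; rewrite hNeq (compose_optens _ hV') => /ffunP /(_ ((a, b.1), (a', b.2))).
    by rewrite !ffunE /= -!surjective_pairing.
  exists ('I_n : finType), (Adf (Wn c)), (fun Y => E' (AdM q Y)); split.
  + exists (Wn c); split => //; exact: (iso_n hW hq hc).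
  + exact: cptp_n.
  + exact: (cu_n hB hE' hq hd hmix).
  + move=> X; rewrite hNeq (compose_eq (W := W) E' hc); exact: compose_ext.
- move=> [R [V [E [[W [hW hV]] hE hu hNeq]]]]; split.
    exists R, V, E; split => //; exists W; split => //.
  move=> rho hrho.
  have [sigma [hs e]] := backward_mix hB hW hV hE hu hrho.
  by exists sigma; split => //; rewrite hNeq.
Qed.
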